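(* Let $n\ge 5$. If $x\in\mathrm{Sort}_n(123,321)$, then $\mathrm{ind}_{s_{123,321}(x)}(2)=\mathrm{ind}_{s_{123,321}(x)}(1)-1$, i.e. $2$ immediately precedes $1$ in $s_{123,321}(x)$.
   Context: $\mathrm{ind}_y(a)$ is the position of the value $a$ in $y$. A permutation contains a pattern $p$ if it has a subsequence order-isomorphic to $p$; otherwise it avoids $p$. For a set $T$ of patterns, the map $s_T$ is defined as follows: the entries of the input permutation are read from left to right, with an initially empty stack. At each step, if the input is nonempty and pushing the next input entry onto the stack produces a stack whose contents, read from top to bottom, avoid every pattern in $T$, that entry is pushed; otherwise the top entry of the stack is popped and appended to the output. When the input is exhausted, the remaining stack entries are popped one at a time to the output. Write $s_{\sigma,\tau}=s_{\{\sigma,\tau\}}$ and $s=s_{\{21\}}$ (West's stack-sorting map). $\mathrm{Sort}_n(\sigma,\tau)$ is the set of $x\in S_n$ with $s(s_{\sigma,\tau}(x))=12\cdots n$. *)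

(* Defs.v *)
From mathcomp Require Import all_boot.
Set Implicit Arguments. Unset Strict Implicit. Unset Printing Implicit Defensive.

(* Permutations of [1..n] are represented as sequences of naturals (one-line
   notation).  Patterns are also sequences of naturals. *)

Fixpoint subseqs (s : seq nat) : seq (seq nat) :=
  match s with
  | [::] => [:: [::]]
  | a :: s' => let r := subseqs s' in [seq a :: t | t <- r] ++ r
  end.

Definition order_iso (t p : seq nat) : bool :=
  (size t == size p) &&
  all (fun i => all (fun j =>
         (nth 0 t i < nth 0 t j) == (nth 0 p i < nth 0 p j))
       (iota 0 (size p))) (iota 0 (size p)).

Definition contains (s p : seq nat) : bool :=
  has (fun t => order_iso t p) (subseqs s).

Definition avoids_all (T : seq (seq nat)) (s : seq nat) : bool :=
  all (fun p => ~~ contains s p) T.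

(* One step of the T-stack-sorting procedure.  State: (input, stack, output);
   the stack is a list whose head is the top entry; output is accumulated in
   order (left to right). *)
Definition stack_step (T : seq (seq nat))
    (st : seq nat * seq nat * seq nat) : seq nat * seq nat * seq nat :=
  let: (inp, stk, out) := st in
  match inp with
  | [::] => st
  | a :: inp' =>
      if avoids_all T (a :: stk) then (inp', a :: stk, out)
      else match stk with
           | [::] => st
           | b :: stk' => (inp, stk', rcons out b)
           end
  end.

(* The map s_T: while input is nonempty perform steps (at most 2 * size x steps
   are ever needed: each entry is pushed once and popped at most once), then
   pop the remaining stack entries (top first) to the output. *)
Definition sT (T : seq (seq nat)) (x : seq nat) : seq nat :=
  let: (_, stk, out) := iter (2 * size x) (stack_step T) (x, [::], [::]) in
  out ++ stk.

Definition s_pair (sigma tau : seq nat) : seq nat -> seq nat := sT [:: sigma; tau].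

Definition west (x : seq nat) : seq nat := sT [:: [:: 2; 1]] x.

Definition in_Sort (n : nat) (sigma tau : seq nat) (x : seq nat) : Prop :=
  perm_eq x (iota 1 n) /\ west (s_pair sigma tau x) = iota 1 n.

Example west_ex : west [:: 3; 1; 2] = [:: 1; 2; 3]. Proof. by vm_compute. Qed.
Example s_ex : s_pair [:: 1;2;3] [:: 3;2;1] [:: 1;2;3] = [:: 2;3;1]. Proof. by vm_compute. Qed.

(* Main.v *)
Require Import Defs.
From mathcomp Require Import all_boot zify.
Set Implicit Arguments. Unset Strict Implicit. Unset Printing Implicit Defensive.

Notation state := (seq nat * seq nat * seq nat)%type.

Definition meas (st : state) : nat := let: (i, s, _) := st in 2 * size i + size s.
Definition Res T (st : state) : seq nat :=
  let: (_, stk, out) := iter (meas st) (stack_step T) st in out ++ stk.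
Definition good T := forall a, avoids_all T [:: a].

Lemma iter_fix T k s o : iter k (stack_step T) ([::], s, o) = ([::], s, o).
Proof. by elim: k => //= k ->. Qed.

Lemma Res_nil T s o : Res T ([::], s, o) = o ++ s.
Proof. by rewrite /Res iter_fix. Qed.

Lemma meas_step T i s o a : good T ->
  meas (a :: i, s, o) = (meas (stack_step T (a :: i, s, o))).+1.
Proof.
move=> g /=; case: ifP => h /=; first lia.
case: s h => [|b s] h /=; first by rewrite g in h.
lia.
Qed.

Lemma ResS T st : good T -> Res T st = Res T (stack_step T st).
Proof.
case: st => [[i s] o] g; case: i => [|a i]; first by [].
by rewrite [in LHS]/Res (meas_step _ _ _ _ g) iterSr.
Qed.

Definition reach T (st st' : state) := exists k, st' = iter k (stack_step T) st.

Lemma reach_refl T st : reach T st st. Proof. by exists 0. Qed.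
Lemma reach_step T st st' : reach T (stack_step T st) st' -> reach T st st'.
Proof. by case=> k ->; exists k.+1; rewrite iterSr. Qed.

Lemma reach_Res T st st' : good T -> reach T st st' -> Res T st' = Res T st.
Proof.
move=> g [k ->]; elim: k => // k IH.
by rewrite iterS -ResS.
Qed.

Lemma reach_trans T a b c : reach T a b -> reach T b c -> reach T a c.
Proof. by case=> k -> [l ->]; exists (l + k); rewrite iterD. Qed.

Lemma step_perm T i s o : let: (i', s', o') := stack_step T (i, s, o) in
  perm_eq (o' ++ s' ++ i') (o ++ s ++ i).
Proof.
case: i => [|a i] //=; case: ifP => _.
  rewrite perm_cat2l -[(a :: s) ++ i]/([:: a] ++ s ++ i) -[a :: i]/([:: a] ++ i).
  by rewrite perm_catCA.
by case: s => [|b s] //=; rewrite cat_rcons.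
Qed.

Lemma avoids_tail T b s : avoids_all T (b :: s) -> avoids_all T s.
Proof.
move=> /allP h; apply/allP => p /h.
by rewrite /contains /= has_cat negb_or => /andP[_ ->].
Qed.

Lemma step_avoid T i s o : avoids_all T s ->
  let: (i', s', o') := stack_step T (i, s, o) in avoids_all T s'.
Proof.
case: i => [|a i] //=; case: ifP => // _.
by case: s => [|b s] //= /avoids_tail.
Qed.

Definition Inv T x0 (st : state) := let: (i, s, o) := st in
  perm_eq (o ++ s ++ i) x0 && avoids_all T s.

Lemma step_inv T x0 st : Inv T x0 st -> Inv T x0 (stack_step T st).
Proof.
case: st => [[i s] o] /andP[hp ha].
move: (step_perm T i s o) (step_avoid i o ha).
case: (stack_step T (i, s, o)) => [[i' s'] o'] hp' ha' /=.
by rewrite ha' (perm_trans hp' hp).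
Qed.

Lemma reach_inv T x0 st st' : reach T st st' -> Inv T x0 st -> Inv T x0 st'.
Proof.
case=> k ->; elim: k => // k IH h; rewrite iterS; exact/step_inv/IH.
Qed.

Lemma step_out T i s o : let: (_, _, o') := stack_step T (i, s, o) in
  exists r, o' = o ++ r.
Proof.
case: i => [|a i] /=; first by exists [::]; rewrite cats0.
case: ifP => _; first by exists [::]; rewrite cats0.
case: s => [|b s] /=; first by exists [::]; rewrite cats0.
by exists [:: b]; rewrite cats1.
Qed.

Lemma reach_out T i s o i' s' o' : reach T (i, s, o) (i', s', o') ->
  exists r, o' = o ++ r.
Proof.
case=> k; elim: k i' s' o' => [|k IH] i' s' o' /=.
  by case=> _ _ ->; exists [::]; rewrite cats0.
case E: (iter k (stack_step T) (i, s, o)) => [[i1 s1] o1].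
have [r1 e1] := IH _ _ _ (esym E).
move: (step_out T i1 s1 o1).
case: (stack_step T (i1, s1, o1)) => [[i2 s2] o2] [r2 e2] [_ _ e3].
by exists (r1 ++ r2); rewrite e3 e2 e1 catA.
Qed.

Lemma reach_final T st : good T -> exists s' o', reach T st ([::], s', o').
Proof.
move=> g; have [k] := ubnP (meas st); elim: k st => // k IH [[i s] o] lt.
case: i lt => [|a i] lt; first by exists s, o; exact: reach_refl.
have lt' : meas (stack_step T (a :: i, s, o)) < k.
  by move: lt; rewrite (meas_step _ _ _ _ g).
have [s' [o' r]] := IH _ lt'.
by exists s', o'; apply: reach_step.
Qed.

Lemma Res_perm T x0 st : good T -> Inv T x0 st -> perm_eq (Res T st) x0.
Proof.
move=> g hI; have [s' [o' r]] := reach_final st g.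
rewrite -(reach_Res g r) Res_nil.
by have /andP[+ _] := reach_inv r hI; rewrite cats0.
Qed.

Lemma out_before T i s o b a : good T -> b \in o -> a \notin o ->
  index b (Res T (i, s, o)) < index a (Res T (i, s, o)).
Proof.
move=> g hb ha; have [s' [o' r]] := reach_final (i, s, o) g.
rewrite -(reach_Res g r) Res_nil.
have [w ->] := reach_out r.
rewrite -catA !index_cat hb (negbTE ha).
have := index_mem b o; rewrite hb; lia.
Qed.

Lemma lifo T b a : good T -> forall i s o, uniq (o ++ s ++ i) -> a \in s ->
  index b s < index a s -> index b (Res T (i, s, o)) < index a (Res T (i, s, o)).
Proof.
move=> g i s o; have [k] := ubnP (meas (i, s, o)).
elim: k i s o => // k IH i s o lt hu ha hba.
have hb : b \in s by rewrite -index_mem; have := index_mem a s; rewrite ha; lia.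
case: i lt hu => [|c i] lt hu.
  rewrite Res_nil !index_cat.
  move: hu; rewrite cats0 cat_uniq => /and3P[_ hd _].
  have -> : (b \in o) = false by apply/negP => hbo; move/hasP: hd; apply; exists b.
  have -> : (a \in o) = false by apply/negP => hao; move/hasP: hd; apply; exists a.
  lia.
have lt' : meas (stack_step T (c :: i, s, o)) < k.
  by move: lt; rewrite (meas_step _ _ _ _ g).
have hu' : uniq (let: (i', s', o') := stack_step T (c :: i, s, o) in o' ++ s' ++ i').
  have := step_perm T (c :: i) s o.
  case: (stack_step T (c :: i, s, o)) => [[i' s'] o'] hp.
  by rewrite (perm_uniq hp).
rewrite ResS //; move: lt' hu'.
rewrite /=; case: ifP => E lt' hu'.
  apply: IH => //; first by rewrite inE ha orbT.
  move: hu; rewrite catA uniq_catC /= => /andP[hc _].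
  have hcb : (c == b) = false by apply/negP => /eqP ?; subst c; rewrite !mem_cat hb !orbT in hc.
  have hca : (c == a) = false by apply/negP => /eqP ?; subst c; rewrite !mem_cat ha !orbT in hc.
  by rewrite /= hcb hca.
case: s lt ha hba hb E lt' hu' hu => [|d s] //= lt ha hba hb E lt' hu' hu.
case: (eqVneq d b) => [?|hdb].
  subst d; apply: out_before => //; first by rewrite mem_rcons inE eqxx.
  rewrite mem_rcons inE negb_or; apply/andP; split.
    by apply/negP => /eqP ?; subst a; rewrite ltnn in hba.
  move: hu; rewrite cat_uniq => /and3P[_ hd _].
  by apply/negP => hao; move/hasP: hd; apply; exists a => //; rewrite -cat_cons mem_cat ha.
have hda : d != a by apply/negP => /eqP ?; subst d; rewrite eqxx in hba.
move: hba ha hb; rewrite (negbTE hdb) (negbTE hda) /= !inE eq_sym (negbTE hda).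
rewrite eq_sym (negbTE hdb) /= ltnS => hba ha hb.
exact: IH.
Qed.

Lemma reach_push T c post : good T -> forall pre s o, exists s' o',
  reach T (pre ++ c :: post, s, o) (c :: post, s', o') /\ avoids_all T (c :: s').
Proof.
move=> g pre s o; have [k] := ubnP (meas (pre ++ c :: post, s, o)).
elim: k pre s o => // k IH pre s o lt.
have lt' : meas (stack_step T (pre ++ c :: post, s, o)) < k.
  by move: lt; case: pre => [|a pre]; rewrite ?cat0s ?cat_cons (meas_step _ _ _ _ g).
case: pre lt lt' => [|a pre] lt lt'.
  case E: (avoids_all T (c :: s)); first by exists s, o; split => //; exact: reach_refl.
  case: s E lt lt' => [|b s] E lt lt'; first by rewrite g in E.
  have lt2 : meas ([::] ++ c :: post, s, rcons o b) < k by move: lt'; rewrite /= E.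
  have [s' [o' [r h]]] := IH [::] s (rcons o b) lt2.
  by exists s', o'; split => //; apply: reach_step; rewrite /= E.
case E: (avoids_all T (a :: s)).
  have lt2 : meas (pre ++ c :: post, a :: s, o) < k by move: lt'; rewrite /= E.
  have [s' [o' [r h]]] := IH pre (a :: s) o lt2.
  by exists s', o'; split => //; apply: reach_step; rewrite /= E.
case: s E lt lt' => [|b s] E lt lt'; first by rewrite g in E.
have lt2 : meas ((a :: pre) ++ c :: post, s, rcons o b) < k by move: lt'; rewrite /= E.
have [s' [o' [r h]]] := IH (a :: pre) s (rcons o b) lt2.
by exists s', o'; split => //; apply: reach_step; rewrite /= E.
Qed.

Lemma mem_subseqs t s : subseq t s -> t \in subseqs s.
Proof.
elim: s t => [|a s IH] t; first by rewrite subseq0 => /eqP ->; rewrite inE.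
rewrite /= mem_cat; case: t => [|x t].
  by move=> _; rewrite IH ?orbT // sub0seq.
rewrite /=; case: eqP => [->|_] h.
  by rewrite (map_f (cons a)) // IH.
by rewrite IH ?orbT.
Qed.

Lemma subseqs_sub t s : t \in subseqs s -> subseq t s.
Proof.
elim: s t => [|a s IH] t; first by rewrite inE => /eqP ->.
rewrite /= mem_cat => /orP[/mapP[u hu ->]|h].
  by rewrite /= eqxx IH.
exact: (subseq_trans (IH _ h) (subseq_cons s a)).
Qed.

Lemma contains_sub t s p : subseq t s -> order_iso t p -> contains s p.
Proof. by move=> h1 h2; apply/hasP; exists t => //; exact: mem_subseqs. Qed.

Lemma avoid_sub T t s : subseq t s -> avoids_all T s -> avoids_all T t.
Proof.
move=> hts /allP h; apply/allP => p hp; apply/negP => /hasP [u hu hiso].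
have := h p hp; rewrite (contains_sub (subseq_trans (subseqs_sub hu) hts) hiso).
by [].
Qed.

Definition T2 := [:: [:: 1;2;3]; [:: 3;2;1]].
Definition T1 := [:: [:: 2;1]].
Definition mono3 a b c := ((a<b)&&(b<c)) || ((c<b)&&(b<a)).

Lemma oi123 a b c : order_iso [:: a;b;c] [:: 1;2;3] = (a<b)&&(b<c).
Proof.
rewrite /order_iso /=.
case: (ltngtP a b) => h1; case: (ltngtP b c) => h2; case: (ltngtP a c) => h3;
rewrite ?ltnn //=; lia.
Qed.
Lemma oi321 a b c : order_iso [:: a;b;c] [:: 3;2;1] = (c<b)&&(b<a).
Proof.
rewrite /order_iso /=.
case: (ltngtP a b) => h1; case: (ltngtP b c) => h2; case: (ltngtP a c) => h3;
rewrite ?ltnn //=; lia.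
Qed.
Lemma oi21 a b : order_iso [:: a;b] [:: 2;1] = (b < a).
Proof.
rewrite /order_iso /=.
case: (ltngtP a b) => h1; rewrite ?ltnn //=; lia.
Qed.

Lemma avoid1 a : avoids_all T2 [:: a]. Proof. by []. Qed.
Lemma avoid2 a b : avoids_all T2 [:: a; b]. Proof. by []. Qed.
Lemma avoid3 a b c : avoids_all T2 [:: a;b;c] = ~~ mono3 a b c.
Proof.
rewrite /avoids_all /contains /= !oi123 !oi321 /order_iso /= /mono3.
by case: (a<b<c); case: (c<b<a).
Qed.
Lemma avoid4 a b c d : avoids_all T2 [:: a;b;c;d] =
  ~~ [|| mono3 a b c, mono3 a b d, mono3 a c d | mono3 b c d].
Proof.
rewrite /avoids_all /contains /= !oi123 !oi321 /order_iso /= /mono3.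
by case: (a<b<c); case: (a<b<d); case: (a<c<d); case: (b<c<d);
  case: (c<b<a); case: (d<b<a); case: (d<c<a); case: (d<c<b).
Qed.
Lemma goodT2 : good T2. Proof. by []. Qed.
Lemma goodT1 : good T1. Proof. by []. Qed.

Lemma index_iota1 n v : v \in iota 1 n -> index v (iota 1 n) = v.-1.
Proof.
rewrite mem_iota => /andP[h1 h2].
have e : nth 0 (iota 1 n) v.-1 = v by rewrite nth_iota; lia.
rewrite -{1}e index_uniq ?iota_uniq ?size_iota //; lia.
Qed.

Definition no231 (y : seq nat) := forall b c a, index b y < index c y ->
  index c y < index a y -> a \in y -> a < b -> b < c -> False.

Lemma west_Res y : west y = Res T1 (y, [::], [::]).
Proof. by rewrite /west /sT /Res /= addn0. Qed.

Lemma west_no231 n y : west y = iota 1 n -> uniq y -> no231 y.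
Proof.
move=> hw hu b c a hbc hca ha hab hbc'.
have hc : c \in y by rewrite -index_mem; have := index_mem a y; rewrite ha; lia.
move: hu hbc hca ha hw; case/splitPr: hc => pre post hu hbc hca ha hw.
have hcpre : c \notin pre by move: hu; rewrite cat_uniq /= => /and3P[_ /norP[h _] _].
move: hbc hca; rewrite !index_cat (negbTE hcpre) /= eqxx addn0 => hbc hca.
have hbpre : b \in pre by case: ifP hbc => //; lia.
have hapre : (a \in pre) = false.
 by apply/negP => h; move: hca; rewrite h; rewrite -index_mem in h => hca; move: (ltn_trans h hca); rewrite ltnn.
case: (eqVneq a c) => [e|hac].
  by rewrite e in hab; move: (ltn_trans hab hbc'); rewrite ltnn.
have hapost : a \in post by move: ha; rewrite mem_cat hapre /= inE (negbTE hac).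
have [s' [o' [r hav]]] := reach_push c post goodT1 pre [::] [::].
have hI : Inv T1 (pre ++ c :: post) (pre ++ c :: post, [::], [::]) by rewrite /= perm_refl.
have /andP[hp _] := reach_inv r hI.
have hu' := hu; rewrite -(perm_uniq hp) in hu'.
have hbo : b \in o' ++ s'.
  have : b \in o' ++ s' ++ c :: post by rewrite (perm_mem hp) mem_cat hbpre.
  rewrite catA mem_cat => /orP[//|]; move: hu; rewrite cat_uniq => /and3P[_ hd _].
  by move=> hb; move/hasP: hd; case; exists b.
have hbs : b \in o'.
  move: hbo; rewrite mem_cat => /orP[//|hbs].
  move: hav; rewrite /avoids_all /= andbT => /negP; case.
  apply: (contains_sub (t := [:: c; b])); last by rewrite oi21.
  by rewrite /= eqxx sub1seq.
have hao : a \notin o'.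
  apply/negP => hao; move: hu'; rewrite cat_uniq => /and3P[_ hd _].
  by move/hasP: hd; case; exists a => //; rewrite mem_cat /= inE hapost !orbT.
have := out_before (c :: post) s' goodT1 hbs hao.
rewrite (reach_Res goodT1 r) -west_Res hw.
have hperm : perm_eq (west (pre ++ c :: post)) (pre ++ c :: post).
  by rewrite west_Res; apply: (Res_perm goodT1 hI).
have hai : a \in iota 1 n by rewrite -hw (perm_mem hperm).
have hbi : b \in iota 1 n by rewrite -hw (perm_mem hperm) mem_cat hbpre.
rewrite (index_iota1 hai) (index_iota1 hbi) => h.
move: hai hbi; rewrite !mem_iota => /andP[h1 _] /andP[h2 _].
have : a.-1 < b.-1 by rewrite -ltnS !prednK.
by move=> /(ltn_trans h); rewrite ltnn.
Qed.

Definition Bot x0 (st : state) := let: (i, s, o) := st in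
  if s is [::] then (o == [::]) && (i == x0) else last 0 s == head 0 x0.

Lemma step_bot x0 st : Bot x0 st -> Bot x0 (stack_step T2 st).
Proof.
case: st => [[i s] o]; case: i => [|a i] //=; case: ifP => E.
  by case: s E => [|b s] E //= /andP[_ /eqP <-].
case: s E => [|b s] E //=; case: s E => [|c s] E //.
Qed.

Lemma reach_bot x0 st st' : reach T2 st st' -> Bot x0 st -> Bot x0 st'.
Proof. case=> k ->; elim: k => // k IH h; rewrite iterS; exact/step_bot/IH. Qed.

Lemma shapeS S : avoids_all T2 (1 :: S) -> uniq (1 :: S) -> (forall v, v \in S -> 0 < v) ->
  S = [::] \/ (exists s1, S = [:: s1]) \/ (exists s1 s2, S = [:: s1; s2] /\ s2 < s1 /\ 1 < s2).
Proof.
case: S => [|s1 [|s2 [|s3 S]]] ha hu hp.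
- by left.
- by right; left; exists s1.
- right; right; exists s1, s2; split => //.
  have p1 : 0 < s1 by apply: hp; rewrite !inE eqxx.
  have p2 : 0 < s2 by apply: hp; rewrite !inE eqxx orbT.
  move: ha hu; rewrite avoid3 /mono3 /= !inE; lia.
- exfalso.
  have := avoid_sub (prefix_subseq [:: 1; s1; s2; s3] S) ha.
  have p1 : 0 < s1 by apply: hp; rewrite !inE eqxx.
  have p2 : 0 < s2 by apply: hp; rewrite !inE eqxx orbT.
  have p3 : 0 < s3 by apply: hp; rewrite !inE eqxx !orbT.
  move: hu; rewrite avoid4 /mono3 /= !inE; lia.
Qed.

Lemma perm_push (o s i : seq nat) c : perm_eq (o ++ (c :: s) ++ i) (o ++ s ++ c :: i).
Proof.
rewrite perm_cat2l -[(c :: s) ++ i]/([:: c] ++ s ++ i) -[c :: i]/([:: c] ++ i).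
by rewrite perm_catCA.
Qed.

Lemma uniq_mid (o s i : seq nat) : uniq (o ++ s ++ i) -> uniq s.
Proof. by rewrite !cat_uniq => /and3P[_ _ /andP[]]. Qed.

Lemma step_cons T c i s o : stack_step T (c :: i, s, o) =
  if avoids_all T (c :: s) then (i, c :: s, o)
  else if s is b :: s' then (c :: i, s', rcons o b) else (c :: i, s, o).
Proof. by []. Qed.

Lemma L4 x0 : uniq x0 -> (forall v, v \in x0 -> 0 < v) -> forall i s o,
  perm_eq (o ++ s ++ i) x0 -> avoids_all T2 s -> 1 \in s -> 2 \in i ->
  no231 (Res T2 (i, s, o)) -> index 2 (Res T2 (i, s, o)) < index 1 (Res T2 (i, s, o)).
Proof.
move=> hu0 hpos i s o; have [k] := ubnP (meas (i, s, o)).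
elim: k i s o => // k IH i s o lt hp ha h1 h2 hno.
case: i lt hp h2 hno => [|c i] lt hp h2 hno //.
have lt' : meas (stack_step T2 (c :: i, s, o)) < k.
  by move: lt; rewrite (meas_step _ _ _ _ goodT2).
have hu : uniq (o ++ s ++ c :: i) by rewrite (perm_uniq hp).
have hc0 : 0 < c by apply: hpos; rewrite -(perm_mem hp) !mem_cat inE eqxx !orbT.
rewrite (ResS _ goodT2) in hno *.
move: lt' hno; rewrite !step_cons; case E: (avoids_all T2 (c :: s)) => lt' hno.
  case: (eqVneq c 2) => [ec|nc].
    subst c; apply: (lifo goodT2).
    - by rewrite (perm_uniq (perm_push _ _ _ _)).
    - by rewrite inE h1 orbT.
    - by [].
  apply: IH => //.
  - exact: (perm_trans (perm_push _ _ _ _) hp).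
  - by rewrite inE h1 orbT.
  - by move: h2; rewrite inE eq_sym (negbTE nc).
case: s lt ha h1 E lt' hno hp hu => [|d S] // lt ha h1 E lt' hno hp hu.
case: (eqVneq d 1) => [ed|nd]; last first.
  apply: IH => //.
  - by rewrite cat_rcons.
  - exact: avoids_tail ha.
  - by move: h1; rewrite inE eq_sym (negbTE nd).
subst d; exfalso.
have huS : uniq (1 :: S) by apply: (uniq_mid hu).
have hposS : forall v, v \in S -> 0 < v.
  by move=> v hv; apply: hpos; rewrite -(perm_mem hp) !mem_cat inE hv !orbT.
case: (shapeS ha huS hposS) => [eS|[[s1 eS]|[s1 [s2 [eS [h21 h2p]]]]]]; subst S.
- by rewrite avoid2 in E.
- have p1 : 0 < s1 by apply: hposS; rewrite inE eqxx.
  by move: E; rewrite avoid3 /mono3; lia.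
have Hm : s1 < c by move: E; rewrite avoid4 /mono3; lia.
have Em : avoids_all T2 [:: c; s1; s2] = false by rewrite avoid3 /mono3; lia.
set O2 := rcons (rcons o 1) s1.
have e1 : Res T2 (c :: i, [:: s1; s2], rcons o 1) = Res T2 (c :: i, [:: s2], O2).
  by rewrite (ResS _ goodT2) step_cons Em.
have e2 : Res T2 (c :: i, [:: s2], O2) = Res T2 (i, [:: c; s2], O2).
  by rewrite (ResS _ goodT2) step_cons avoid2.
rewrite e1 e2 in hno.
have hp2 : perm_eq (O2 ++ [:: c; s2] ++ i) (o ++ [:: 1, s1, s2 & c :: i]).
  by rewrite /O2 -!cats1 -!catA; apply/permP => p /=; rewrite !count_cat /=; lia.
have hu2 : uniq (O2 ++ [:: c; s2] ++ i) by rewrite (perm_uniq hp2).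
have hcs2 : c != s2 by apply/eqP => e; subst c; lia.
have hA : index c (Res T2 (i, [:: c; s2], O2)) < index s2 (Res T2 (i, [:: c; s2], O2)).
  by apply: (lifo goodT2) => //=; rewrite ?inE ?eqxx ?orbT // (negbTE hcs2).
have hB : index s1 (Res T2 (i, [:: c; s2], O2)) < index c (Res T2 (i, [:: c; s2], O2)).
  rewrite -e2; apply: (out_before _ _ goodT2); first by rewrite /O2 mem_rcons inE eqxx.
  by move: hu2; rewrite cat_uniq /= negb_or => /and3P[_ /andP[]].
have hIn : s2 \in Res T2 (i, [:: c; s2], O2).
  have hI : Inv T2 (O2 ++ [:: c; s2] ++ i) (i, [:: c; s2], O2) by rewrite /Inv perm_refl avoid2.
  by rewrite (perm_mem (Res_perm goodT2 hI)) !mem_cat !inE eqxx !orbT.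
exact: (hno s1 c s2 hB hA hIn h21 Hm).
Qed.

Lemma bot_last x0 s o : Bot x0 ([::], s, o) -> s != [::] -> last 0 s = head 0 x0.
Proof.
case/lastP: s => [|s0 z] //; case: s0 => [|a s0] /= /eqP -> //.
Qed.

Lemma perm_rev4 (a b c d : nat) r : perm_eq ([::] ++ [:: a; b; c; d] ++ r) [:: d, c, b, a & r].
Proof. by apply/permP => p /=; lia. Qed.
Lemma perm_rev3 (a b c d : nat) r : perm_eq ([::] ++ [:: a; b; c] ++ d :: r) [:: c, b, a, d & r].
Proof. by apply/permP => p /=; lia. Qed.

Lemma uniq4 (a b c d : nat) r : uniq [:: a, b, c, d & r] ->
  [/\ a != b, a != c, a != d, b != c & (b != d) && (c != d)].
Proof.
rewrite /= !inE => /and4P[/norP[h1 /norP[h2 /norP[h3 _]]] /norP[h4 /norP[h5 _]] /norP[h6 _] _].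
by rewrite h1 h2 h3 h4 h5 h6.
Qed.

Lemma first2 x0 r : x0 = 2 :: r -> uniq x0 -> (forall v, v \in x0 -> 0 < v) ->
  3 <= size r -> no231 (Res T2 (x0, [::], [::])) -> False.
Proof.
move=> ex hu hpos hs hno.
set y := Res T2 (x0, [::], [::]) in hno.
have hI : Inv T2 x0 (x0, [::], [::]) by rewrite /Inv perm_refl.
have hpy : perm_eq y x0 := Res_perm goodT2 hI.
have huy : uniq y by rewrite (perm_uniq hpy).
have hlast : forall v, v \in y -> v != 2 -> index v y < index 2 y.
  have [s' [o' r0]] := reach_final (x0, [::], [::]) goodT2.
  have hb : Bot x0 ([::], s', o') by apply: (reach_bot r0); rewrite /Bot !eqxx.
  have ey : y = o' ++ s' by rewrite /y -(reach_Res goodT2 r0) Res_nil.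
  have hs' : s' != [::].
    by apply/eqP => es; move: hb; rewrite es /= ex andbF.
  have := bot_last hb hs'; rewrite ex /=.
  case/lastP: s' ey hs' {hb r0} => [|s0 z] // ey _; rewrite last_rcons => ez; subst z.
  move=> v hv hv2; move: huy hv; rewrite ey -rcons_cat -cats1.
  set w := o' ++ s0 => hu' hv.
  have h2w : 2 \notin w by move: hu'; rewrite cat_uniq /= orbF andbT => /andP[_].
  have hvw : v \in w by move: hv; rewrite mem_cat inE (negbTE hv2) orbF.
  by rewrite !index_cat hvw (negbTE h2w) /= ?eqxx ?addn0 -index_cat index_mem.
have h2y : 2 \in y by rewrite (perm_mem hpy) ex mem_head.
have asc : forall b c, b \in y -> c \in y -> 2 < b -> b < c -> index b y < index c y -> False.
  move=> b c hb hc h2b hbc hi; apply: (hno b c 2 hi) => //.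
  by apply: hlast hc _; rewrite neq_ltn (ltn_trans h2b hbc) orbT.
case: r ex hs => [|x2 [|x3 [|x4 r']]] // ex _.
have mem_y : forall v, v \in x0 -> v \in y by move=> v; rewrite (perm_mem hpy).
have p2 : 0 < x2 by apply: hpos; rewrite ex !inE eqxx !orbT.
have p3 : 0 < x3 by apply: hpos; rewrite ex !inE eqxx !orbT.
have p4 : 0 < x4 by apply: hpos; rewrite ex !inE eqxx !orbT.
have m2 : x2 \in y by apply: mem_y; rewrite ex !inE eqxx !orbT.
have m3 : x3 \in y by apply: mem_y; rewrite ex !inE eqxx !orbT.
have m4 : x4 \in y by apply: mem_y; rewrite ex !inE eqxx !orbT.
have := hu; rewrite ex => /uniq4 [d22 d32 d42 d23 /andP[d24 d34]].
rewrite eq_sym in d22; rewrite eq_sym in d32; rewrite eq_sym in d42.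
have e0 : y = Res T2 (x3 :: x4 :: r', [:: x2; 2], [::]).
  by rewrite /y ex (ResS _ goodT2) step_cons avoid1 (ResS _ goodT2) step_cons avoid2.
have uq : forall l, perm_eq l x0 -> uniq l by move=> l hl; rewrite (perm_uniq hl).
case: (eqVneq x2 1) => [e2|n2].
  subst x2.
  have hA3 : avoids_all T2 [:: x3; 1; 2] by rewrite avoid3 /mono3; lia.
  have e1 : y = Res T2 (x4 :: r', [:: x3; 1; 2], [::]).
    by rewrite e0 (ResS _ goodT2) step_cons hA3.
  case E: (avoids_all T2 [:: x4; x3; 1; 2]).
    have e4 : y = Res T2 (r', [:: x4; x3; 1; 2], [::]).
      by rewrite e1 (ResS _ goodT2) step_cons E.
    have hi : index x4 y < index x3 y.
      rewrite e4; apply: (lifo goodT2).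
      - by apply: uq; rewrite ex; apply: perm_rev4.
      - by rewrite !inE eqxx !orbT.
      - rewrite /=; have -> : (x4 == x4) = true by rewrite eqxx.
        by have -> : (x4 == x3) = false by lia.
    by apply: (asc x4 x3) => //; move: E; rewrite avoid4 /mono3; lia.
  have e4 : y = Res T2 (x4 :: r', [:: 1; 2], [:: x3]).
    by rewrite e1 (ResS _ goodT2) step_cons E.
  have hi : index x3 y < index x4 y.
    by rewrite e4; apply: (out_before _ _ goodT2); rewrite !inE ?eqxx //; lia.
  by apply: (asc x3 x4) => //; move: E; rewrite avoid4 /mono3; lia.
case E3: (avoids_all T2 [:: x3; x2; 2]); last first.
  have e1 : y = Res T2 (x3 :: x4 :: r', [:: 2], [:: x2]).
    by rewrite e0 (ResS _ goodT2) step_cons E3.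
  have hi : index x2 y < index x3 y.
    by rewrite e1; apply: (out_before _ _ goodT2); rewrite !inE ?eqxx //; lia.
  by apply: (asc x2 x3) => //; move: E3; rewrite avoid3 /mono3; lia.
have e1 : y = Res T2 (x4 :: r', [:: x3; x2; 2], [::]).
  by rewrite e0 (ResS _ goodT2) step_cons E3.
case: (eqVneq x3 1) => [e3|n3]; last first.
  have hi : index x3 y < index x2 y.
    rewrite e1; apply: (lifo goodT2).
    - by apply: uq; rewrite ex; apply: perm_rev3.
    - by rewrite !inE eqxx !orbT.
    - rewrite /=; have -> : (x3 == x3) = true by rewrite eqxx.
      by have -> : (x3 == x2) = false by lia.
  by apply: (asc x3 x2) => //; move: E3; rewrite avoid3 /mono3; lia.
subst x3.
case E4: (avoids_all T2 [:: x4; 1; x2; 2]).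
  have e4 : y = Res T2 (r', [:: x4; 1; x2; 2], [::]).
    by rewrite e1 (ResS _ goodT2) step_cons E4.
  have hi : index x4 y < index x2 y.
    rewrite e4; apply: (lifo goodT2).
    - by apply: uq; rewrite ex; apply: perm_rev4.
    - by rewrite !inE eqxx !orbT.
    - rewrite /=; have -> : (x4 == x4) = true by rewrite eqxx.
      have -> : (x4 == x2) = false by lia.
      by have -> : (1 == x2) = false by lia.
  by apply: (asc x4 x2) => //; move: E4; rewrite avoid4 /mono3; lia.
have E5 : avoids_all T2 [:: x4; x2; 2] = false.
  by move: E4; rewrite avoid4 avoid3 /mono3; lia.
have e4 : y = Res T2 (x4 :: r', [:: 2], [:: 1; x2]).
  by rewrite e1 (ResS _ goodT2) step_cons E4 (ResS _ goodT2) step_cons E5.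
have hi : index x2 y < index x4 y.
  by rewrite e4; apply: (out_before _ _ goodT2); rewrite !inE ?eqxx ?orbT //; lia.
by apply: (asc x2 x4) => //; move: E4; rewrite avoid4 /mono3; lia.
Qed.

Unset Implicit Arguments.
Theorem lemma4p5 (n : nat) (x : seq nat) :
  5 <= n ->
  in_Sort n [:: 1; 2; 3] [:: 3; 2; 1] x ->
  index 2 (s_pair [:: 1; 2; 3] [:: 3; 2; 1] x) + 1 =
  index 1 (s_pair [:: 1; 2; 3] [:: 3; 2; 1] x).
Proof.
move=> hn [hx hw].
have ey : s_pair [:: 1; 2; 3] [:: 3; 2; 1] x = Res T2 (x, [::], [::]).
  by rewrite /s_pair /sT /Res /= addn0.
rewrite ey in hw *.
set y := Res T2 (x, [::], [::]) in hw *.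
have hu : uniq x by rewrite (perm_uniq hx) iota_uniq.
have hpos : forall v, v \in x -> 0 < v.
  by move=> v; rewrite (perm_mem hx) mem_iota => /andP[].
have hI : Inv T2 x (x, [::], [::]) by rewrite /Inv perm_refl.
have hpy : perm_eq y x := Res_perm goodT2 hI.
have huy : uniq y by rewrite (perm_uniq hpy).
have hno : no231 y := west_no231 hw huy.
have h1x : 1 \in x by rewrite (perm_mem hx) mem_iota; apply/andP; split => //; lia.
have h2x : 2 \in x by rewrite (perm_mem hx) mem_iota; apply/andP; split => //; lia.
have H21 : index 2 y < index 1 y.
  have [x1 [r ex]] : exists x1 r, x = x1 :: r.
    by case: (x) h1x => // a r _; exists a, r.
  case: (eqVneq x1 2) => [e|ne].
    exfalso; apply: (first2 (x0 := x) (r := r)) => //; first by rewrite ex e.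
    by have := perm_size hx; rewrite size_iota ex /=; lia.
  set i := index 1 x.
  have ex1 : x = take i x ++ 1 :: drop i.+1 x.
    have hi : i < size x by rewrite index_mem.
    by rewrite -{1}(nth_index 0 h1x) -drop_nth // cat_take_drop.
  have [s' [o' [r1 hav]]] := reach_push 1 (drop i.+1 x) goodT2 (take i x) [::] [::].
  rewrite -ex1 in r1.
  have eR : y = Res T2 (1 :: drop i.+1 x, s', o') by rewrite /y (reach_Res goodT2 r1).
  have /andP[hp1 ha1] := reach_inv r1 hI.
  have hb1 : Bot x (1 :: drop i.+1 x, s', o') by apply: (reach_bot r1); rewrite /Bot !eqxx.
  have hu1 : uniq (o' ++ s' ++ 1 :: drop i.+1 x) by rewrite (perm_uniq hp1).
  have : 2 \in o' ++ s' ++ 1 :: drop i.+1 x by rewrite (perm_mem hp1).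
  rewrite !mem_cat inE /= => /orP[h2o|/orP[h2s|h2p]].
  - rewrite eR; apply: (out_before _ _ goodT2) => //.
    by move: hu1; rewrite cat_uniq => /and3P[_ /hasPn /(_ 1)]; rewrite !mem_cat inE eqxx orbT => /(_ isT).
  - exfalso.
    have huS : uniq (1 :: s') by apply: (@uniq_mid o' _ (drop i.+1 x)); rewrite (perm_uniq (perm_push _ _ _ _)).
    have hposS : forall v, v \in s' -> 0 < v.
      by move=> v hv; apply: hpos; rewrite -(perm_mem hp1) !mem_cat hv orbT.
    case: (shapeS hav huS hposS) => [eS|[[s1 eS]|[s1 [s2 [eS [h21 h2p]]]]]]; subst s'.
    + by [].
    + move: hb1 h2s; rewrite /= ex /= inE => /eqP -> /eqP e2.
      by rewrite e2 eqxx in ne.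
    + move: hb1 h2s; rewrite /= ex /= !inE => /eqP e1 /orP[/eqP e2|/eqP e2].
        by subst s1; lia.
      by rewrite -e1 -e2 eqxx in ne.
  -
    have eR2 : y = Res T2 (drop i.+1 x, 1 :: s', o').
      by rewrite eR (ResS _ goodT2) step_cons hav.
    rewrite eR2; apply: (L4 hu hpos) => //.
    + exact: (perm_trans (perm_push _ _ _ _) hp1).
    + by rewrite -eR2.
set k := index 2 y.
have h1y : 1 \in y by rewrite (perm_mem hpy).
have hk1 : index 1 y < size y by rewrite index_mem.
case: (ltngtP k.+1 (index 1 y)) => hc; last by rewrite addn1.
  exfalso.
  set u := nth 0 y k.+1.
  have hku : k.+1 < size y by lia.
  have hiu : index u y = k.+1 by rewrite index_uniq.
  have huy' : u \in y by rewrite mem_nth.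
  have hu1 : u != 1 by apply/eqP => e; move: hiu; rewrite e; lia.
  have hu2 : u != 2 by apply/eqP => e; move: hiu; rewrite e /k; lia.
  have hup : 0 < u by apply: hpos; rewrite -(perm_mem hpy).
  apply: (hno 2 u 1) => //; rewrite ?hiu //; lia.
by move: hc; rewrite /k; lia.
Qed.
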